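(* For positive integers $N$ and $M\le N$, for $n\in\{1,\dots,M-1\}$ and $l\in\{1,\dots,M-1-n\}$ let $$c_M(n,l;t)=\prod_{j=1}^n\left|\frac{(1-t^{M-l-j})(1-t^{l+j})}{1-t^j}\right|.$$ For each $M$ let $(n_M,l_M)$ be a pair in this range at which $c_M(n,l;e^{\frac{2\pi i}{N+1/2}})$ attains its maximum. Assume $\frac{M}{N+\frac12}\to s\in[0,1]$, $\frac{n_M}{N+\frac12}\to n_s$ and $\frac{l_M}{N+\frac12}\to l_s$ as $N\to\infty$. Then $$\lim_{N\to\infty}\frac{1}{N+\frac12}\log c_M\big(n_M,l_M;e^{\frac{2\pi i}{N+1/2}}\big)\le\frac{\mathrm{Vol}(\mathbb{S}^3\setminus WL)}{2\pi},$$ with equality if and only if $s=1$, $n_s=\tfrac12$ and $l_s=\tfrac14$.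
   Context: $WL$ denotes the Whitehead link; $\mathrm{Vol}(\mathbb{S}^3\setminus WL)=v_8=8\Lambda(\pi/4)$ is its hyperbolic volume, where $\Lambda(\theta)=-\int_0^\theta\log|2\sin t|\,dt$ is the Lobachevsky function and $v_8$ is the volume of the regular ideal octahedron. *)

(* Defs.v *)
From Stdlib Require Import Reals.
From Coquelicot Require Import Coquelicot.
Open Scope R_scope.

Fixpoint prod1 (f : nat -> R) (n : nat) : R :=
  match n with
  | O => 1
  | S k => prod1 f k * f (S k)
  end.

Definition expi (theta : R) : C := (cos theta, sin theta).

Definition cM (M n l : nat) (t : C) : R :=
  prod1 (fun j => Cmod (((1 - Cpow t (M - l - j)) * (1 - Cpow t (l + j)))
                        / (1 - Cpow t j))%C) n.

Definition Lob (theta : R) : R :=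
  - RInt_gen (fun x => ln (Rabs (2 * sin x))) (at_right 0) (at_point theta).

(* volume of the regular ideal octahedron = Vol(S^3 \ Whitehead link) *)
Definition v8 : R := 8 * Lob (PI / 4).

Definition tN (N : nat) : C := expi (2 * PI / (INR N + / 2)).

(* Main.v *)
Require Import Defs.
From Stdlib Require Import Reals Lra Lia.
From Coquelicot Require Import Coquelicot.
Open Scope R_scope.

Lemma MVT_open (f f' : R -> R) (a b : R) : a < b ->
  (forall x, a < x < b -> is_derive f x (f' x)) ->
  (forall x, a <= x <= b -> continuity_pt f x) ->
  exists c, a < c < b /\ f b - f a = f' c * (b - a).
Proof.
  intros Hab Hd Hc.
  assert (pr1 : forall c, a < c < b -> derivable_pt f c).
  { intros c Hc'. exists (f' c). apply is_derive_Reals. now apply Hd. }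
  assert (pr2 : forall c, a < c < b -> derivable_pt id c).
  { intros c _. apply derivable_pt_id. }
  destruct (MVT f id a b pr1 pr2 Hab Hc (fun c _ => derivable_continuous_pt _ _ (derivable_pt_id c)))
    as [c [P HP]].
  exists c. split; [exact P|].
  rewrite (derive_pt_eq_0 f c (f' c) (pr1 c P)) in HP.
  2:{ apply is_derive_Reals. now apply Hd. }
  rewrite (derive_pt_eq_0 id c 1 (pr2 c P)) in HP.
  2:{ apply derivable_pt_lim_id. }
  unfold id in HP. lra.
Qed.

Lemma strict_inc (f f' : R -> R) (a b : R) : a < b ->
  (forall x, a < x < b -> is_derive f x (f' x)) ->
  (forall x, a <= x <= b -> continuity_pt f x) ->
  (forall x, a < x < b -> 0 < f' x) -> f a < f b.
Proof.
  intros Hab Hd Hc Hp. destruct (MVT_open f f' a b Hab Hd Hc) as [c [Hc1 Hc2]].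
  specialize (Hp c Hc1). nra.
Qed.

Lemma strict_dec (f f' : R -> R) (a b : R) : a < b ->
  (forall x, a < x < b -> is_derive f x (f' x)) ->
  (forall x, a <= x <= b -> continuity_pt f x) ->
  (forall x, a < x < b -> f' x < 0) -> f b < f a.
Proof.
  intros Hab Hd Hc Hp. destruct (MVT_open f f' a b Hab Hd Hc) as [c [Hc1 Hc2]].
  specialize (Hp c Hc1). nra.
Qed.

Lemma const_fun (f f' : R -> R) (a b : R) : a <= b ->
  (forall x, a < x < b -> is_derive f x (f' x)) ->
  (forall x, a <= x <= b -> continuity_pt f x) ->
  (forall x, a < x < b -> f' x = 0) -> f a = f b.
Proof.
  intros Hab Hd Hc Hp. destruct (Rle_lt_or_eq_dec a b Hab) as [H|H]; [|now subst].
  destruct (MVT_open f f' a b H Hd Hc) as [c [Hc1 Hc2]].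
  rewrite (Hp c Hc1) in Hc2. lra.
Qed.

Lemma cont_of_eps (f : R -> R) (x : R) :
  (forall eps, 0 < eps -> exists alp, 0 < alp /\
     forall y, Rabs (y - x) < alp -> Rabs (f y - f x) < eps) -> continuity_pt f x.
Proof.
  intros H eps He. destruct (H eps He) as [alp [Ha Hy]].
  exists alp. split; [lra|]. intros y [_ Hyx]. simpl in *. unfold R_dist in *. now apply Hy.
Qed.

Lemma eps_of_cont (f : R -> R) (x : R) : continuity_pt f x ->
  forall eps, 0 < eps -> exists alp, 0 < alp /\
     forall y, Rabs (y - x) < alp -> Rabs (f y - f x) < eps.
Proof.
  intros H eps He. destruct (H eps He) as [alp [Ha Hy]].
  exists alp. split; [lra|]. intros y Hyx.
  destruct (Req_dec y x) as [->|Hne].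
  - replace (f x - f x) with 0 by ring. rewrite Rabs_R0. lra.
  - apply (Hy y). split; [split; [exact I| congruence]|]. simpl. unfold R_dist. exact Hyx.
Qed.

Lemma cont_ext_loc (f g : R -> R) (x e : R) : 0 < e ->
  (forall y, Rabs (y - x) < e -> f y = g y) -> continuity_pt g x -> continuity_pt f x.
Proof.
  intros He Hfg Hg. apply cont_of_eps. intros eps Heps.
  destruct (eps_of_cont g x Hg eps Heps) as [alp [Ha Hy]].
  exists (Rmin alp e). split; [now apply Rmin_pos|].
  intros y Hy'. rewrite (Hfg y), (Hfg x).
  - apply Hy. eapply Rlt_le_trans; [exact Hy'| apply Rmin_l].
  - rewrite Rminus_diag, Rabs_R0; lra.
  - eapply Rlt_le_trans; [exact Hy'| apply Rmin_r].
Qed.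

Lemma ln_nonpos (x : R) : x <= 0 -> ln x = 0.
Proof. intros H. unfold ln. destruct (Rlt_dec 0 x) as [Hl|Hl]; [exfalso; apply (Rlt_irrefl 0); apply (Rlt_le_trans _ _ _ Hl H)|reflexivity]. Qed.

Lemma ln_le_xm1 (y : R) : 0 < y -> ln y <= y - 1.
Proof. intros H. pose proof (exp_ineq1_le (ln y)) as H0. rewrite exp_ln in H0; lra. Qed.

Lemma xlnx_lb (x : R) : 0 < x -> -2 * sqrt x <= x * ln x.
Proof.
  intros Hx. set (u := sqrt x). assert (Hu : 0 < u) by (apply sqrt_lt_R0; lra).
  assert (Hx2 : x = u * u) by (unfold u; rewrite sqrt_sqrt; lra).
  assert (Hl : ln x = 2 * ln u) by (rewrite Hx2, ln_mult; lra).
  pose proof (ln_le_xm1 (/ u) (Rinv_0_lt_compat _ Hu)) as H1.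
  rewrite ln_Rinv in H1 by lra.
  rewrite Hl, Hx2.
  assert (u * u * (2 * ln u) = 2 * u * (u * ln u)) by ring. rewrite H.
  assert (u * ln u >= - 1 + u) .
  { assert (u * (- ln u) <= u * (/u - 1)) by (apply Rmult_le_compat_l; lra).
    replace (u * (/u - 1)) with (1 - u) in H0 by (field; lra). lra. }
  nra.
Qed.

Lemma xlnx_ub (x : R) : 0 < x <= 1 -> x * ln x <= 0.
Proof.
  intros Hx. assert (ln x <= 0). { rewrite <- ln_1. apply ln_le; lra. } nra.
Qed.

Definition q (t : R) : R := if Req_dec_T t 0 then 1 else sin t / t.

Lemma q_nz (t : R) : t <> 0 -> q t = sin t / t.
Proof. intros H. unfold q. destruct (Req_dec_T t 0); [contradiction|reflexivity]. Qed.

Lemma q_0 : q 0 = 1.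
Proof. unfold q. destruct (Req_dec_T 0 0); [reflexivity|contradiction]. Qed.

Lemma q_cont (t : R) : continuity_pt q t.
Proof.
  destruct (Req_dec t 0) as [->|Ht].
  - apply cont_of_eps. intros eps He.
    destruct (derivable_pt_lim_sin 0 eps He) as [d Hd].
    exists d. split; [apply cond_pos|]. intros y Hy.
    rewrite q_0. destruct (Req_dec y 0) as [->|Hy0].
    + rewrite q_0. rewrite Rminus_diag, Rabs_R0. lra.
    + rewrite q_nz by exact Hy0. specialize (Hd y Hy0).
      rewrite Rminus_0_r in Hy. specialize (Hd Hy).
      rewrite Rplus_0_l, sin_0, cos_0, Rminus_0_r in Hd. exact Hd.
  - apply (cont_ext_loc q (fun t => sin t / t) t (Rabs t)).
    + now apply Rabs_pos_lt.
    + intros y Hy. apply q_nz. intros ->. rewrite Rminus_0_l, Rabs_Ropp in Hy. lra.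
    + apply continuity_pt_div; [apply continuity_sin| apply derivable_continuous_pt, derivable_pt_id|exact Ht].
Qed.

Definition rr (t : R) : R := (q t + q (PI - t)) / PI.

Lemma pos_div (x y : R) : 0 < x * y -> 0 < x / y.
Proof.
  intros H. assert (y <> 0) by (intros ->; lra).
  replace (x / y) with (x * y / (y * y)) by (field; auto).
  apply Rdiv_lt_0_compat; [exact H|]. assert (0 < y*y \/ y*y = 0 \/ y*y < 0) by lra. nra.
Qed.

Lemma rr_eq (t : R) : t <> 0 -> t <> PI -> rr t = sin t / (t * (PI - t)).
Proof.
  intros H0 HP. unfold rr. rewrite !q_nz by lra. rewrite sin_PI_x.
  field. split; [lra|split; [lra|]]. pose proof PI_RGT_0. lra.
Qed.

Lemma rr_pos (t : R) : - PI < t < 2 * PI -> 0 < rr t.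
Proof.
  intros [H1 H2]. pose proof PI_RGT_0 as HP.
  destruct (Req_dec t 0) as [->|H0].
  { unfold rr. rewrite q_0, Rminus_0_r, q_nz by lra. rewrite sin_PI. 
    apply Rdiv_lt_0_compat; lra. }
  destruct (Req_dec t PI) as [->|HPi].
  { unfold rr. rewrite Rminus_diag, q_0, q_nz by lra. rewrite sin_PI.
    apply Rdiv_lt_0_compat; lra. }
  rewrite rr_eq by assumption. apply pos_div.
  destruct (Rlt_or_le t 0) as [Hn|Hn].
  - pose proof (sin_lt_0_var t ltac:(lra) Hn). 
    assert (t * (PI - t) < 0) by nra. nra.
  - destruct (Rlt_or_le t PI) as [Hp|Hp].
    + pose proof (sin_gt_0 t ltac:(lra) Hp). assert (0 < t * (PI - t)) by nra. nra.
    + pose proof (sin_lt_0 t ltac:(lra) H2). assert (t * (PI - t) < 0) by nra. nra.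
Qed.

Lemma rr_cont (t : R) : continuity_pt rr t.
Proof.
  unfold rr. apply continuity_pt_div.
  - apply continuity_pt_plus; [apply q_cont|].
    apply (continuity_pt_comp (fun t => PI - t) q).
    + apply continuity_pt_minus; [apply continuity_pt_const; intros ? ?; reflexivity|apply derivable_continuous_pt, derivable_pt_id].
    + apply q_cont.
  - apply continuity_pt_const; intros ? ?; reflexivity.
  - pose proof PI_RGT_0; lra.
Qed.

Definition lk (t : R) : R := ln (rr t).

Lemma lk_cont (t : R) : - PI < t < 2 * PI -> continuity_pt lk t.
Proof.
  intros Ht. unfold lk. apply (continuity_pt_comp rr ln).
  - apply rr_cont.
  - apply derivable_continuous_pt. exists (/ rr t). apply derivable_pt_lim_ln. now apply rr_pos.
Qed.

Definition Kint (x : R) : R := RInt lk 0 x.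

Lemma Kint_deriv (x : R) : - PI < x < 2 * PI -> is_derive Kint x (lk x).
Proof.
  intros Hx. pose proof PI_RGT_0 as HP.
  apply is_derive_RInt with (a := 0).
  - assert (He : 0 < Rmin (x + PI) (2 * PI - x)) by (apply Rmin_pos; lra).
    exists (mkposreal _ He). intros y Hy.
    change (Rabs (y - x) < Rmin (x + PI) (2 * PI - x)) in Hy.
    assert (Hy1 := Rmin_l (x + PI) (2 * PI - x)). assert (Hy2 := Rmin_r (x + PI) (2 * PI - x)).
    apply Rabs_def2 in Hy.
    unfold Kint. apply (RInt_correct lk 0 y). apply ex_RInt_continuous. intros z Hz.
    apply continuity_pt_filterlim. apply lk_cont.
    assert (Rmin 0 y <= z <= Rmax 0 y) by exact Hz.
    unfold Rmin, Rmax in H. destruct (Rle_dec 0 y); lra.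
  - apply continuity_pt_filterlim. apply lk_cont. exact Hx.
Qed.

Definition phi (y : R) : R := y * ln y - y.

Lemma phi_deriv (y : R) : 0 < y -> is_derive phi y (ln y).
Proof.
  intros Hy. unfold phi. auto_derive; [exact Hy|]. field. lra.
Qed.

Lemma phi_cont (y : R) : 0 <= y -> continuity_pt phi y.
Proof.
  intros Hy. destruct (Rle_lt_or_eq_dec 0 y Hy) as [Hp| <-].
  - apply derivable_continuous_pt. exists (ln y). apply is_derive_Reals. now apply phi_deriv.
  - apply cont_of_eps. intros eps He.
    set (e3 := eps / 3).
    exists (Rmin 1 (Rmin e3 (e3 * e3))). split.
    { apply Rmin_pos; [lra|apply Rmin_pos; unfold e3; nra]. }
    intros z Hz. rewrite Rminus_0_r in Hz.
    assert (Hz1 := Rle_lt_trans _ _ _ (Rle_refl _) (Rlt_le_trans _ _ _ Hz (Rmin_l _ _))).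
    assert (Hz2 := Rlt_le_trans _ _ _ Hz (Rle_trans _ _ _ (Rmin_r _ _) (Rmin_l _ _))).
    assert (Hz3 := Rlt_le_trans _ _ _ Hz (Rle_trans _ _ _ (Rmin_r _ _) (Rmin_r _ _))).
    unfold phi. rewrite Rmult_0_l, Rminus_0_r, Rminus_0_r.
    destruct (Rle_lt_dec z 0) as [Hn|Hpz].
    + rewrite ln_nonpos by exact Hn. rewrite Rmult_0_r, Rminus_0_l, Rabs_Ropp. unfold e3 in *. lra.
    + rewrite Rabs_right in Hz1, Hz2, Hz3 by lra.
      pose proof (xlnx_lb z Hpz). pose proof (xlnx_ub z ltac:(lra)).
      assert (sqrt z < e3).
      { assert (e3 > 0) by (unfold e3; lra).
        rewrite <- (sqrt_square e3) by lra. apply sqrt_lt_1; nra. }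
      apply Rabs_def1; unfold e3 in *; lra.
Qed.

Definition F (x : R) : R := x * ln 2 + phi x - phi (PI - x) + Kint x.

Definition g (x : R) : R := ln (2 * sin x).

Lemma F_deriv (x : R) : 0 < x < PI -> is_derive F x (g x).
Proof.
  intros Hx. pose proof PI_RGT_0 as HP.
  assert (H1 : is_derive (fun x => x * ln 2) x (ln 2)) by (auto_derive; [exact I| ring]).
  assert (H2 : is_derive (fun x => phi (PI - x)) x (- ln (PI - x))).
  { assert (H := is_derive_comp phi (fun x => PI - x) x (ln (PI - x)) (-1)).
    replace (- ln (PI - x)) with (scal (-1) (ln (PI - x))).
    2:{ unfold scal; simpl; unfold mult; simpl. ring. }
    apply H. apply phi_deriv; lra. auto_derive; [exact I|ring]. }
  assert (H3 := phi_deriv x ltac:(lra)).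
  assert (H4 := Kint_deriv x ltac:(lra)).
  assert (H : is_derive F x (ln 2 + ln x - - ln (PI - x) + lk x)).
  { apply (is_derive_ext (fun y => plus (minus (plus (y * ln 2) (phi y)) (phi (PI - y))) (Kint y))).
    { intros t. reflexivity. }
    replace (ln 2 + ln x - - ln (PI - x) + lk x) with
      (plus (minus (plus (ln 2) (ln x)) (- ln (PI - x))) (lk x)) by reflexivity.
    apply (is_derive_plus _ Kint); [|exact H4].
    apply (is_derive_minus _ (fun y => phi (PI - y))); [|exact H2].
    apply (is_derive_plus (fun y => y * ln 2) phi); [exact H1|exact H3]. }
  replace (g x) with (ln 2 + ln x - - ln (PI - x) + lk x); [exact H|].
  unfold g, lk. 
  assert (Hr : 0 < rr x) by (apply rr_pos; lra).
  rewrite rr_eq in * by lra.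
  assert (2 * sin x = 2 * x * (PI - x) * (sin x / (x * (PI - x)))) by (field; lra).
  rewrite H0. rewrite !ln_mult; try lra; try nra.
Qed.

Lemma F_cont (x : R) : 0 <= x <= PI -> continuity_pt F x.
Proof.
  intros Hx. pose proof PI_RGT_0 as HP. unfold F.
  apply continuity_pt_plus; [apply continuity_pt_minus; [apply continuity_pt_plus|]|].
  - apply continuity_pt_mult; [apply derivable_continuous_pt, derivable_pt_id|apply continuity_pt_const; intros ? ?; reflexivity].
  - apply phi_cont; lra.
  - apply (continuity_pt_comp (fun t => PI - t) phi).
    + apply continuity_pt_minus; [apply continuity_pt_const; intros ? ?; reflexivity|apply derivable_continuous_pt, derivable_pt_id].
    + apply phi_cont; lra.
  - apply derivable_continuous_pt. exists (lk x). apply is_derive_Reals. apply Kint_deriv. lra.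
Qed.

Lemma Flin_deriv (c d y : R) : 0 < c * y + d < PI ->
  is_derive (fun t => F (c * t + d)) y (c * g (c * y + d)).
Proof.
  intros H.
  replace (c * g (c * y + d)) with (scal c (g (c * y + d))) by reflexivity.
  apply (is_derive_comp F (fun t => c * t + d)); [now apply F_deriv|].
  auto_derive; [exact I|ring].
Qed.

Lemma Flin_cont (c d y : R) : 0 <= c * y + d <= PI -> continuity_pt (fun t => F (c * t + d)) y.
Proof.
  intros H. apply (continuity_pt_comp (fun t => c * t + d) F).
  - apply derivable_continuous_pt. exists c. apply is_derive_Reals. auto_derive; [exact I|ring].
  - now apply F_cont.
Qed.

Lemma g_sym (x : R) : g (PI - x) = g x.
Proof. unfold g. now rewrite sin_PI_x. Qed.

Lemma F_sym0 (x : R) : 0 <= x <= PI -> F x + F (PI - x) = F 0 + F PI.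
Proof.
  intros Hx. pose proof PI_RGT_0.
  assert (E : forall t, F t + F (PI - t) = plus (F (1 * t + 0)) (F (-1 * t + PI))).
  { intros t. unfold plus; simpl. f_equal; f_equal; ring. }
  rewrite (E x). replace (F 0 + F PI) with (plus (F (1*0+0)) (F (-1*0+PI))) by (unfold plus; simpl; f_equal; f_equal; ring).
  symmetry.
  apply (const_fun (fun t => plus (F (1 * t + 0)) (F (-1 * t + PI)))
           (fun t => plus (1 * g (1 * t + 0)) (-1 * g (-1 * t + PI))) 0 x); [lra| | |].
  - intros y Hy. apply (is_derive_plus (fun t => F (1 * t + 0)) (fun t => F (-1 * t + PI)));
      apply Flin_deriv; lra.
  - intros y Hy. apply continuity_pt_plus; apply Flin_cont; lra.
  - intros y Hy. unfold plus; simpl.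
    replace (-1 * y + PI) with (PI - y) by ring. rewrite g_sym. replace (1 * y + 0) with y by ring. ring.
Qed.

Lemma F_0PI : F 0 = F PI.
Proof.
  pose proof PI_RGT_0.
  set (D := fun t => minus (minus (F (2 * t + 0)) (2 * F (1 * t + 0))) (2 * F (1 * t + PI / 2))).
  assert (HD : D 0 = D (PI / 2)).
  { apply (const_fun D (fun t => minus (minus (2 * g (2 * t + 0)) (2 * (1 * g (1 * t + 0))))
                                         (2 * (1 * g (1 * t + PI / 2)))) 0 (PI / 2)); [lra| | |].
    - intros y Hy. unfold D.
      apply (is_derive_minus (fun t => minus (F (2 * t + 0)) (2 * F (1 * t + 0))) (fun t => 2 * F (1 * t + PI / 2))).
      + apply (is_derive_minus (fun t => F (2 * t + 0)) (fun t => 2 * F (1 * t + 0))).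
        * apply Flin_deriv; lra.
        * apply (is_derive_scal (fun t => F (1 * t + 0))). apply Flin_deriv; lra.
      + apply (is_derive_scal (fun t => F (1 * t + PI / 2))). apply Flin_deriv; lra.
    - intros y Hy.
      apply (cont_ext_loc D (fun t => F (2*t+0) - 2 * F (1*t+0) - 2 * F (1*t+PI/2)) y 1); [lra|intros; reflexivity|].
      assert (Hc : forall t, continuity_pt (fun _ : R => 2) t) by (intros; apply continuity_pt_const; intros ? ?; reflexivity).
      apply continuity_pt_minus; [apply continuity_pt_minus|].
      + apply Flin_cont; lra.
      + apply continuity_pt_mult; [apply Hc|]. apply Flin_cont; lra.
      + apply continuity_pt_mult; [apply Hc|]. apply Flin_cont; lra.
    - intros y Hy. unfold minus, plus, opp; simpl.
      replace (2 * y + 0) with (2 * y) by ring. replace (1 * y + 0) with y by ring.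
      replace (1 * y + PI / 2) with (y + PI / 2) by ring.
      unfold g. rewrite sin_2a, sin_plus, sin_PI2, cos_PI2.
      assert (0 < sin y) by (apply sin_gt_0; lra).
      assert (0 < cos y) by (apply cos_gt_0; lra).
      replace (2 * (2 * sin y * cos y)) with ((2 * sin y) * (2 * cos y)) by ring.
      replace (2 * (sin y * 0 + cos y * 1)) with (2 * cos y) by ring.
      rewrite ln_mult by lra. ring. }
  unfold D, minus, plus, opp in HD; simpl in HD.
  replace (2 * 0 + 0) with 0 in HD by ring. replace (1 * 0 + 0) with 0 in HD by ring.
  replace (1 * 0 + PI / 2) with (PI / 2) in HD by ring.
  replace (2 * (PI / 2) + 0) with PI in HD by field.
  replace (1 * (PI / 2) + 0) with (PI / 2) in HD by ring.
  replace (1 * (PI / 2) + PI / 2) with PI in HD by field.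
  lra.
Qed.

Lemma F_half : F (PI / 2) = F 0.
Proof.
  pose proof PI_RGT_0. pose proof (F_sym0 (PI / 2) ltac:(lra)) as H1.
  replace (PI - PI / 2) with (PI / 2) in H1 by field. rewrite <- F_0PI in H1. lra.
Qed.

Lemma F_sym (x : R) : 0 <= x <= PI -> F x + F (PI - x) = 2 * F 0.
Proof. intros H. rewrite F_sym0 by exact H. rewrite <- F_0PI. ring. Qed.
Lemma g_cont (x : R) : 0 < x < PI -> continuity_pt g x.
Proof.
  intros Hx. unfold g. apply (continuity_pt_comp (fun x => 2 * sin x) ln).
  - apply continuity_pt_mult; [apply continuity_pt_const; intros ? ?; reflexivity|apply continuity_sin].
  - apply derivable_continuous_pt. exists (/ (2 * sin x)). apply derivable_pt_lim_ln.
    pose proof (sin_gt_0 x (proj1 Hx) (proj2 Hx)). lra.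
Qed.

Lemma gabs_cont (x : R) : 0 < x < PI -> continuity_pt (fun x => ln (Rabs (2 * sin x))) x.
Proof.
  intros Hx. apply (continuity_pt_comp (fun x => Rabs (2 * sin x)) ln).
  - apply (continuity_pt_comp (fun x => 2 * sin x) Rabs).
    + apply continuity_pt_mult; [apply continuity_pt_const; intros ? ?; reflexivity|apply continuity_sin].
    + apply Rcontinuity_abs.
  - apply derivable_continuous_pt. exists (/ (Rabs (2 * sin x))). apply derivable_pt_lim_ln.
    pose proof (sin_gt_0 x (proj1 Hx) (proj2 Hx)). rewrite Rabs_right; lra.
Qed.

Lemma Lob_F (th : R) : 0 < th < PI -> Lob th = - (F th - F 0).
Proof.
  intros Hth. unfold Lob. f_equal.
  apply (is_RInt_gen_unique (Fa := at_right 0) (Fb := at_point th)).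
  intros P [eps Heps].
  destruct (eps_of_cont F 0 (F_cont 0 ltac:(pose proof PI_RGT_0; lra)) eps (cond_pos eps)) as [alp [Ha Hal]].
  assert (Hm : 0 < Rmin alp th) by (apply Rmin_pos; lra).
  apply (Filter_prod _ _ _ (fun a => 0 < a < th /\ Rabs (a - 0) < alp) (fun b => b = th)).
  - exists (mkposreal _ Hm). intros y Hy Hy0. 
    change (Rabs (y - 0) < Rmin alp th) in Hy.
    assert (H1 := Rmin_l alp th). assert (H2 := Rmin_r alp th).
    split; [|lra]. rewrite Rminus_0_r in Hy. rewrite Rabs_right in Hy by lra. lra.
  - reflexivity.
  - intros a b [Ha1 Ha2] ->. simpl. exists (F th - F a). split.
    + apply (is_RInt_derive F (fun x => ln (Rabs (2 * sin x)))).
      * intros x Hx. rewrite Rmin_left, Rmax_right in Hx by lra.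
        replace (ln (Rabs (2 * sin x))) with (g x).
        { apply F_deriv; lra. }
        unfold g. pose proof (sin_gt_0 x ltac:(lra) ltac:(lra)). rewrite Rabs_right; lra.
      * intros x Hx. rewrite Rmin_left, Rmax_right in Hx by lra.
        apply continuity_pt_filterlim. apply gabs_cont. lra.
    + apply Heps. change (Rabs ((F th - F a) - (F th - F 0)) < eps).
      specialize (Hal a Ha2). replace ((F th - F a) - (F th - F 0)) with (- (F a - F 0)) by ring.
      rewrite Rabs_Ropp. exact Hal.
Qed.
Fixpoint ssum (f : nat -> R) (n : nat) : R :=
  match n with O => 0 | S k => ssum f k + f (S k) end.

Definition Sd (d : R) (m : nat) : R := ssum (fun k => g (INR k * d)) m.

Lemma sin_half (u : R) : 0 <= u <= 1 -> u / 2 <= sin u.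
Proof. intros H. pose proof (pre_sin_bound u 0 ltac:(lra) ltac:(lra)) as [H1 _].
  unfold sin_approx, sin_term in H1. simpl in H1. nra. Qed.

Lemma g_inc (x y : R) : 0 < x -> x <= y -> y <= PI / 2 -> g x <= g y.
Proof.
  intros H1 H2 H3. pose proof PI_RGT_0. unfold g. apply ln_le.
  - pose proof (sin_gt_0 x H1 ltac:(lra)). lra.
  - apply Rmult_le_compat_l; [lra|]. apply sin_incr_1; lra.
Qed.

Lemma g_dec (x y : R) : PI / 2 <= x -> x <= y -> y < PI -> g y <= g x.
Proof.
  intros H1 H2 H3. pose proof PI_RGT_0. unfold g. apply ln_le.
  - pose proof (sin_gt_0 y ltac:(lra) H3). lra.
  - apply Rmult_le_compat_l; [lra|]. apply sin_decr_1; lra.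
Qed.

Lemma g_top (x : R) : 0 < x < PI -> g x <= g (PI / 2).
Proof.
  intros H. unfold g. rewrite sin_PI2. apply ln_le.
  - pose proof (sin_gt_0 x (proj1 H) (proj2 H)). lra.
  - pose proof (SIN_bound x). lra.
Qed.

Lemma g_lowb (u x : R) : 0 < u <= PI / 2 -> u <= x <= PI - u -> g u <= g x.
Proof.
  intros Hu Hx. destruct (Rle_dec x (PI / 2)).
  - apply g_inc; lra.
  - rewrite <- (g_sym x). apply g_inc; lra.
Qed.

Definition TV (x y : R) : R :=
  if Rle_dec y (PI / 2) then g y - g x
  else if Rle_dec (PI / 2) x then g x - g y
  else 2 * g (PI / 2) - g x - g y.

Lemma TV_bound (x c y : R) : 0 < x -> x <= c -> c <= y -> y < PI ->
  Rabs (g y - g c) <= TV x y.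
Proof.
  intros H1 H2 H3 H4. pose proof PI_RGT_0. apply Rabs_le. unfold TV.
  destruct (Rle_dec y (PI / 2)) as [r|r].
  - pose proof (g_inc x c H1 H2 ltac:(lra)). pose proof (g_inc c y ltac:(lra) H3 r). lra.
  - destruct (Rle_dec (PI / 2) x) as [r0|r0].
    + pose proof (g_dec x c r0 H2 ltac:(lra)). pose proof (g_dec c y ltac:(lra) H3 H4). lra.
    + pose proof (g_top c ltac:(lra)). pose proof (g_top y ltac:(lra)). pose proof (g_top x ltac:(lra)).
      destruct (Rle_dec c (PI / 2)) as [r1|r1].
      * pose proof (g_inc x c H1 H2 r1). lra.
      * pose proof (g_dec c y ltac:(lra) H3 H4). lra.
Qed.

Lemma TV_nonneg (x y : R) : 0 < x -> x <= y -> y < PI -> 0 <= TV x y.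
Proof.
  intros. eapply Rle_trans; [apply Rabs_pos|]. apply (TV_bound x y y); lra.
Qed.

Lemma TV_le (x y : R) : 0 < x -> x <= y -> y < PI -> TV x y <= 2 * g (PI / 2) - g x - g y.
Proof.
  intros. pose proof (g_top x ltac:(lra)). pose proof (g_top y ltac:(lra)).
  unfold TV. destruct (Rle_dec y (PI / 2)); [lra|]. destruct (Rle_dec (PI / 2) x); lra.
Qed.

Lemma TV_add (x y z : R) : 0 < x -> x <= y -> y <= z -> z < PI -> TV x y + TV y z = TV x z.
Proof.
  intros. unfold TV.
  destruct (Rle_dec y (PI / 2)); destruct (Rle_dec (PI / 2) x);
  destruct (Rle_dec z (PI / 2)); destruct (Rle_dec (PI / 2) y); try lra;
  first [ assert (Hy : y = PI / 2) by lra; assert (Hx : x = PI / 2) by lra; rewrite Hx, Hy; lra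
        | assert (Hy : y = PI / 2) by lra; rewrite Hy; lra
        | assert (Hx : x = PI / 2) by lra; rewrite Hx; lra
        | assert (Hz : z = PI / 2) by lra; rewrite Hz; lra ].
Qed.

Lemma err_bound (d : R) (m : nat) : 0 < d -> (1 <= m)%nat -> INR m * d < PI ->
  Rabs (d * (Sd d m - g d) - (F (INR m * d) - F d)) <= d * TV d (INR m * d).
Proof.
  intros Hd. induction m as [|k IH]; intros Hm Hlt; [lia|].
  pose proof PI_RGT_0.
  destruct (Nat.eq_dec k 0) as [->|Hk].
  - unfold Sd. simpl ssum. simpl INR in *. rewrite !Rmult_1_l in *.
    replace (d * (0 + g d - g d) - (F d - F d)) with 0 by ring. rewrite Rabs_R0.
    apply Rmult_le_pos; [lra|]. apply TV_nonneg; lra.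
  - assert (Hk1 : (1 <= k)%nat) by lia.
    assert (Hki : 1 <= INR k) by (apply (le_INR 1 k); exact Hk1).
    rewrite S_INR in *.
    assert (Hlt' : INR k * d < PI) by nra.
    specialize (IH Hk1 Hlt').
    set (x := INR k * d) in *. set (y := (INR k + 1) * d) in *.
    assert (Hxy : y = x + d) by (unfold x, y; ring).
    assert (Hdx : d <= x) by (unfold x; nra).
    destruct (MVT_open F g x y ltac:(lra)) as [c [Hc HFc]].
    { intros t Ht. apply F_deriv; lra. }
    { intros t Ht. apply F_cont; lra. }
    assert (E : d * (Sd d (S k) - g d) - (F y - F d) =
                (d * (Sd d k - g d) - (F x - F d)) + d * (g y - g c)).
    { assert (HF2 : F y = F x + g c * d). { replace d with (y - x) by lra. lra. }
      unfold Sd. cbn [ssum]. fold (Sd d k). rewrite S_INR. fold y.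
      rewrite HF2. ring. }
    rewrite E. eapply Rle_trans; [apply Rabs_triang|].
    rewrite Rabs_mult, (Rabs_right d) by lra.
    rewrite <- (TV_add d x y) by lra. rewrite Rmult_plus_distr_l.
    apply Rplus_le_compat; [exact IH|].
    apply Rmult_le_compat_l; [lra|]. apply TV_bound; lra.
Qed.

Lemma full_bound (d : R) (m : nat) : 0 < d <= 1 -> INR m * d <= PI - d / 2 ->
  Rabs (d * Sd d m - (F (INR m * d) - F 0)) <=
  d * (2 * g (PI / 2) - 2 * g (d / 2)) + Rabs (d * g d - (F d - F 0)).
Proof.
  intros Hd Hm. pose proof PI_RGT_0. pose proof PI2_1.
  assert (Hg2 : g (d / 2) <= g (PI / 2)) by (apply g_top; lra).
  destruct m as [|k].
  - unfold Sd. simpl ssum. simpl INR. rewrite Rmult_0_l.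
    replace (d * 0 - (F 0 - F 0)) with 0 by ring. rewrite Rabs_R0.
    apply Rplus_le_le_0_compat; [apply Rmult_le_pos; lra| apply Rabs_pos].
  - assert (Hki : 1 <= INR (S k)) by (apply (le_INR 1 (S k)); lia).
    set (y := INR (S k) * d) in *.
    assert (Hy : d <= y) by (unfold y; nra).
    pose proof (err_bound d (S k) ltac:(lra) ltac:(lia) ltac:(unfold y in Hm; lra)) as He.
    fold y in He.
    replace (d * Sd d (S k) - (F y - F 0)) with
      ((d * (Sd d (S k) - g d) - (F y - F d)) + (d * g d - (F d - F 0))) by ring.
    eapply Rle_trans; [apply Rabs_triang|]. apply Rplus_le_compat_r.
    eapply Rle_trans; [exact He|]. apply Rmult_le_compat_l; [lra|].
    eapply Rle_trans; [apply TV_le; lra|].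
    pose proof (g_lowb (d / 2) d ltac:(lra) ltac:(lra)).
    pose proof (g_lowb (d / 2) y ltac:(lra) ltac:(lra)). lra.
Qed.
Definition hN (N : nat) : R := / (INR N + / 2).
Definition dl (N : nat) : R := PI * hN N.

Lemma hN_pos (N : nat) : 0 < hN N.
Proof. unfold hN. apply Rinv_0_lt_compat. pose proof (pos_INR N). lra. Qed.

Lemma dl_pos (N : nat) : 0 < dl N.
Proof. unfold dl. pose proof (hN_pos N). pose proof PI_RGT_0. nra. Qed.

Lemma hN_lim : is_lim_seq hN 0.
Proof.
  unfold hN. replace (Finite 0) with (Rbar_inv p_infty) by reflexivity.
  apply is_lim_seq_inv; [|discriminate].
  apply (is_lim_seq_le_p_loc INR); [exists 0%nat; intros; lra|apply is_lim_seq_INR].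
Qed.

Lemma dl_lim : is_lim_seq dl 0.
Proof.
  unfold dl. replace (Finite 0) with (Rbar_mult PI 0) by (simpl; f_equal; ring).
  apply is_lim_seq_scal_l. apply hN_lim.
Qed.

Lemma dl_small (N : nat) : (4 <= N)%nat -> dl N <= 1.
Proof.
  intros HN. unfold dl, hN. pose proof PI_4. pose proof PI_RGT_0.
  assert (4 <= INR N) by (apply (le_INR 4 N) in HN; simpl in HN; lra).
  apply (Rmult_le_reg_r (INR N + / 2)); [lra|].
  rewrite Rmult_assoc, Rinv_l by lra. lra.
Qed.

Lemma dl_N (N : nat) : INR N * dl N = PI - dl N / 2.
Proof.
  unfold dl, hN. pose proof (pos_INR N). field. lra.
Qed.

Lemma lim0_plus (u v : nat -> R) : is_lim_seq u 0 -> is_lim_seq v 0 -> is_lim_seq (fun n => u n + v n) 0.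
Proof. intros Hu Hv. pose proof (is_lim_seq_plus' u v 0 0 Hu Hv) as H. now rewrite Rplus_0_r in H. Qed.

Lemma lim0_scal (u : nat -> R) (a : R) : is_lim_seq u 0 -> is_lim_seq (fun n => a * u n) 0.
Proof. intros Hu. pose proof (is_lim_seq_scal_l u a 0 Hu) as H. simpl in H. now rewrite Rmult_0_r in H. Qed.

Lemma lim0_sqrt (u : nat -> R) : is_lim_seq u 0 -> is_lim_seq (fun n => sqrt (u n)) 0.
Proof.
  intros Hu. pose proof (is_lim_seq_continuous sqrt u 0 (continuity_pt_sqrt 0 (Rle_refl 0)) Hu) as H.
  now rewrite sqrt_0 in H.
Qed.

Lemma dgd_bounds (d : R) : 0 < d <= 1 -> -2 * sqrt d <= d * g d <= d * g (PI / 2).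
Proof.
  intros Hd. pose proof PI2_1. split.
  - eapply Rle_trans; [apply xlnx_lb; lra|]. apply Rmult_le_compat_l; [lra|].
    unfold g. apply ln_le; [lra|]. pose proof (sin_half d ltac:(lra)). lra.
  - apply Rmult_le_compat_l; [lra|]. apply g_top. lra.
Qed.

Definition Bn (N : nat) : R :=
  dl N * (2 * g (PI / 2) - 2 * g (dl N / 2)) + Rabs (dl N * g (dl N) - (F (dl N) - F 0)).

Lemma Bn_lim : is_lim_seq Bn 0.
Proof.
  pose proof dl_lim as Hd.
  assert (Hdg : forall (c : R), 0 < c <= 1 -> is_lim_seq (fun N => (c * dl N) * g (c * dl N)) 0).
  { intros c Hc. 
    assert (Hcd : is_lim_seq (fun N => c * dl N) 0) by (apply lim0_scal; exact Hd).
    apply (is_lim_seq_le_le_loc (fun N => -2 * sqrt (c * dl N)) _ (fun N => (c * dl N) * g (PI / 2))).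
    - exists 4%nat. intros N HN. apply dgd_bounds. pose proof (dl_pos N). pose proof (dl_small N HN). nra.
    - apply lim0_scal. apply lim0_sqrt. exact Hcd.
    - apply (is_lim_seq_ext (fun N => g (PI / 2) * (c * dl N))); [intros; ring|]. apply lim0_scal. exact Hcd. }
  unfold Bn. apply lim0_plus.
  - apply (is_lim_seq_ext (fun N => 2 * g (PI / 2) * dl N + (-4) * ((/2 * dl N) * g (/2 * dl N)))).
    { intros N. cbv beta. unfold Rdiv. rewrite (Rmult_comm (dl N) (/ 2)). field. }
    apply lim0_plus; apply lim0_scal; [exact Hd|]. apply Hdg. lra.
  - replace (Finite 0) with (Rbar_abs 0) by (simpl; now rewrite Rabs_R0).
    apply is_lim_seq_abs.
    assert (H1 : is_lim_seq (fun N => dl N * g (dl N)) 0).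
    { apply (is_lim_seq_ext (fun N => (1 * dl N) * g (1 * dl N))); [intros; now rewrite Rmult_1_l|].
      apply Hdg. lra. }
    assert (H2 : is_lim_seq (fun N => F (dl N) - F 0) (F 0 - F 0)).
    { apply is_lim_seq_minus'; [|apply is_lim_seq_const].
      apply is_lim_seq_continuous; [apply F_cont; pose proof PI_RGT_0; lra|exact Hd]. }
    pose proof (is_lim_seq_minus' _ _ _ _ H1 H2) as H3.
    replace (0 - (F 0 - F 0)) with 0 in H3 by ring. exact H3.
Qed.

Lemma RS (b : nat -> nat) (beta : R) (N1 : nat) :
  (forall N, (N1 <= N)%nat -> (b N <= N)%nat) ->
  is_lim_seq (fun N => INR (b N) / (INR N + / 2)) beta ->
  is_lim_seq (fun N => dl N * Sd (dl N) (b N)) (F (PI * beta) - F 0).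
Proof.
  intros Hb Hlim. pose proof PI_RGT_0.
  assert (Hb0 : 0 <= beta).
  { assert (H0 := is_lim_seq_le_loc (fun _ => 0) (fun N => INR (b N) / (INR N + / 2)) 0 beta). simpl in H0. apply H0; [|apply is_lim_seq_const|exact Hlim].
    exists 0%nat. intros N _. unfold Rdiv. apply Rmult_le_pos; [apply pos_INR|left; apply hN_pos]. }
  assert (Hb1 : beta <= 1).
  { assert (H0 := is_lim_seq_le_loc (fun N => INR (b N) / (INR N + / 2)) (fun _ => 1) beta 1). simpl in H0. apply H0; [|exact Hlim|apply is_lim_seq_const].
    exists N1. intros N HN. specialize (Hb N HN). apply le_INR in Hb.
    pose proof (pos_INR N). apply (Rmult_le_reg_r (INR N + /2)); [lra|]. unfold Rdiv.
    rewrite Rmult_assoc, Rinv_l by lra. lra. }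
  assert (Ha : is_lim_seq (fun N => INR (b N) * dl N) (PI * beta)).
  { apply (is_lim_seq_ext (fun N => PI * (INR (b N) / (INR N + / 2)))).
    { intros N. unfold dl, hN. unfold Rdiv. ring. }
    apply (is_lim_seq_scal_l _ PI beta) in Hlim. exact Hlim. }
  assert (HF : is_lim_seq (fun N => F (INR (b N) * dl N)) (F (PI * beta))).
  { apply is_lim_seq_continuous; [apply F_cont; nra|exact Ha]. }
  assert (Herr : is_lim_seq (fun N => dl N * Sd (dl N) (b N) - (F (INR (b N) * dl N) - F 0)) 0).
  { apply (is_lim_seq_le_le_loc (fun N => - Bn N) _ Bn).
    - exists (max N1 4). intros N HN.
      assert (Hf := full_bound (dl N) (b N)).
      assert (Hd1 := dl_pos N). assert (Hd2 := dl_small N ltac:(lia)).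
      assert (HbN : INR (b N) * dl N <= PI - dl N / 2).
      { rewrite <- dl_N. apply Rmult_le_compat_r; [lra|]. apply le_INR. apply Hb. lia. }
      specialize (Hf ltac:(lra) HbN). fold (Bn N) in Hf.
      apply Rabs_le_between in Hf. lra.
    - replace (Finite 0) with (Rbar_opp 0) by (simpl; f_equal; ring). apply (is_lim_seq_opp Bn 0). apply Bn_lim.
    - apply Bn_lim. }
  apply (is_lim_seq_ext (fun N => (dl N * Sd (dl N) (b N) - (F (INR (b N) * dl N) - F 0)) + (F (INR (b N) * dl N) - F 0))).
  { intros; ring. }
  replace (F (PI * beta) - F 0) with (0 + (F (PI * beta) - F 0)) by ring.
  apply is_lim_seq_plus'; [exact Herr|].
  apply is_lim_seq_minus'; [exact HF|apply is_lim_seq_const].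
Qed.
Lemma Cpow_expi (th : R) (k : nat) : Cpow (expi th) k = expi (INR k * th).
Proof.
  induction k as [|k IH].
  - simpl. unfold expi. rewrite Rmult_0_l, cos_0, sin_0. reflexivity.
  - rewrite Cpow_S, IH. unfold expi, Cmult. simpl fst; simpl snd. rewrite S_INR.
    replace ((INR k + 1) * th) with (th + INR k * th) by ring.
    rewrite cos_plus, sin_plus. f_equal; ring.
Qed.

Lemma Cmod_1m_expi (phi0 : R) : Cmod (1 - expi phi0) = 2 * Rabs (sin (phi0 / 2)).
Proof.
  unfold Cmod, expi, Cminus, Cplus, Copp. simpl fst; simpl snd.
  replace ((1 + - cos phi0) ^ 2 + (0 + - sin phi0) ^ 2) with (Rsqr (2 * sin (phi0 / 2))).
  - rewrite sqrt_Rsqr_abs, Rabs_mult, Rabs_right by lra. reflexivity.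
  - replace phi0 with (2 * (phi0 / 2)) at 2 3 by field.
    rewrite cos_2a_sin, sin_2a. unfold Rsqr.
    pose proof (sin2_cos2 (phi0 / 2)) as Hs. unfold Rsqr in Hs. nra.
Qed.

Lemma term_eq (N k : nat) : (1 <= k)%nat -> (k <= N)%nat ->
  Cmod (1 - Cpow (tN N) k) = 2 * sin (INR k * dl N) /\ 0 < sin (INR k * dl N).
Proof.
  intros H1 H2. pose proof PI_RGT_0. pose proof (dl_pos N).
  assert (Hk : 0 < INR k * dl N < PI).
  { split. apply Rmult_lt_0_compat; [apply lt_0_INR; lia|lra].
    rewrite <- (Rminus_0_r PI). rewrite <- (Rplus_0_r (INR k * dl N)).
    pose proof (dl_N N). apply le_INR in H2. nra. }
  assert (Hs : 0 < sin (INR k * dl N)) by (apply sin_gt_0; lra).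
  split; [|exact Hs].
  unfold tN. rewrite Cpow_expi, Cmod_1m_expi.
  replace (INR k * (2 * PI / (INR N + / 2)) / 2) with (INR k * dl N).
  - rewrite Rabs_right; lra.
  - unfold dl, hN. field. pose proof (pos_INR N). lra.
Qed.

Lemma cM_S (M n l : nat) (t : C) : cM M (S n) l t =
  cM M n l t * Cmod (((1 - Cpow t (M - l - S n)) * (1 - Cpow t (l + S n))) / (1 - Cpow t (S n)))%C.
Proof. reflexivity. Qed.

Lemma Sd_S (d : R) (m : nat) : Sd d (S m) = Sd d m + g (INR (S m) * d).
Proof. reflexivity. Qed.

Lemma nz_of_Cmod (c : C) : 0 < Cmod c -> c <> 0%C.
Proof. intros H ->. rewrite Cmod_0 in H. lra. Qed.

Lemma ln_cM (N M n l : nat) : (1 <= l)%nat -> (l + n <= M - 1)%nat -> (M <= N)%nat ->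
  0 < cM M n l (tN N) /\
  ln (cM M n l (tN N)) = (Sd (dl N) (M - l - 1) - Sd (dl N) (M - l - n - 1))
                         + (Sd (dl N) (l + n) - Sd (dl N) l) - Sd (dl N) n.
Proof.
  intros Hl. induction n as [|n IH]; intros Hn HM.
  - unfold cM. simpl prod1. rewrite ln_1, Nat.sub_0_r, Nat.add_0_r. split; [lra|].
    unfold Sd at 5. simpl ssum. ring.
  - destruct (IH ltac:(lia) HM) as [Hp Hln].
    destruct (term_eq N (M - l - S n) ltac:(lia) ltac:(lia)) as [Ea Pa].
    destruct (term_eq N (l + S n) ltac:(lia) ltac:(lia)) as [Eb Pb].
    destruct (term_eq N (S n) ltac:(lia) ltac:(lia)) as [Ec Pc].
    rewrite cM_S. rewrite Cmod_div by (apply nz_of_Cmod; lra).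
    rewrite Cmod_mult, Ea, Eb, Ec.
    assert (Hf : 0 < 2 * sin (INR (M - l - S n) * dl N) * (2 * sin (INR (l + S n) * dl N)) /
                 (2 * sin (INR (S n) * dl N))).
    { apply Rdiv_lt_0_compat; [apply Rmult_lt_0_compat|]; lra. }
    split; [apply Rmult_lt_0_compat; assumption|].
    rewrite ln_mult by assumption. rewrite Hln.
    unfold Rdiv. rewrite ln_mult by (try apply Rmult_lt_0_compat; try apply Rinv_0_lt_compat; lra).
    rewrite ln_Rinv by lra. rewrite ln_mult by lra.
    replace (M - l - n - 1)%nat with (S (M - l - S n - 1)) by lia.
    replace (l + S n)%nat with (S (l + n)) by lia.
    rewrite !Sd_S.
    replace (S (M - l - S n - 1)) with (M - l - S n)%nat by lia.
    fold (g (INR (M - l - S n) * dl N)). fold (g (INR (S (l + n)) * dl N)). fold (g (INR (S n) * dl N)).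
    ring.
Qed.
Lemma gdiff_pos (x C : R) : 0 < C -> 0 < x -> x + C / 2 < PI / 2 -> g x < g (x + C).
Proof.
  intros HC Hx Hm. pose proof PI_RGT_0. unfold g. apply ln_increasing.
  - pose proof (sin_gt_0 x Hx ltac:(lra)). lra.
  - assert (sin (x + C) - sin x > 0); [|lra].
    rewrite form4. replace ((x + C + x) / 2) with (x + C / 2) by field.
    replace ((x + C - x) / 2) with (C / 2) by field.
    pose proof (cos_gt_0 (x + C / 2) ltac:(lra) Hm). pose proof (sin_gt_0 (C / 2) ltac:(lra) ltac:(lra)).
    nra.
Qed.

Lemma gdiff_neg (x C : R) : 0 < C -> 0 < x -> PI / 2 < x + C / 2 -> x + C < PI -> g (x + C) < g x.
Proof.
  intros HC Hx Hm HP. pose proof PI_RGT_0. unfold g. apply ln_increasing.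
  - pose proof (sin_gt_0 (x + C) ltac:(lra) HP). lra.
  - assert (sin (x + C) - sin x < 0); [|lra].
    rewrite form4. replace ((x + C + x) / 2) with (x + C / 2) by field.
    replace ((x + C - x) / 2) with (C / 2) by field.
    pose proof (cos_lt_0 (x + C / 2) Hm ltac:(lra)). pose proof (sin_gt_0 (C / 2) ltac:(lra) ltac:(lra)).
    nra.
Qed.

Lemma psi_deriv (C a : R) : 0 < a -> a + C < PI -> 0 <= C ->
  is_derive (fun x => F (x + C) - F x) a (g (a + C) - g a).
Proof.
  intros H1 H2 H3.
  apply (is_derive_ext (fun x => minus (F (1 * x + C)) (F (1 * x + 0)))).
  { intros t. change R in t. replace (1 * t + C) with (t + C) by ring. replace (1 * t + 0) with t by ring. reflexivity. }
  replace (g (a + C) - g a) with (minus (1 * g (1 * a + C)) (1 * g (1 * a + 0))).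
  2:{ replace (1 * a + C) with (a + C) by ring. replace (1 * a + 0) with a by ring.
      unfold minus, plus, opp; simpl. ring. }
  apply (is_derive_minus (fun x => F (1 * x + C)) (fun x => F (1 * x + 0))); apply Flin_deriv; lra.
Qed.

Lemma psi_cont (C a : R) : 0 <= a -> a + C <= PI -> 0 <= C ->
  continuity_pt (fun x => F (x + C) - F x) a.
Proof.
  intros H1 H2 H3. apply continuity_pt_minus.
  - apply (continuity_pt_comp (fun x => x + C) F).
    + apply continuity_pt_plus; [apply derivable_continuous_pt, derivable_pt_id|apply continuity_pt_const; intros ? ?; reflexivity].
    + apply F_cont; lra.
  - apply F_cont; lra.
Qed.

Lemma window (A C : R) : 0 <= C -> 0 <= A -> A + C <= PI ->
  F (A + C) - F A <= F ((PI + C) / 2) - F ((PI - C) / 2) /\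
  (F (A + C) - F A = F ((PI + C) / 2) - F ((PI - C) / 2) -> C = 0 \/ A = (PI - C) / 2).
Proof.
  intros HC HA HAC. pose proof PI_RGT_0.
  set (m := (PI - C) / 2).
  assert (Hm : F ((PI + C) / 2) - F m = F (m + C) - F m) by (unfold m; f_equal; f_equal; field).
  rewrite Hm.
  destruct (Req_dec C 0) as [->|HC0].
  { rewrite !Rplus_0_r. split; [lra|intros; now left]. }
  assert (HCp : 0 < C) by lra.
  destruct (Rlt_or_le A m) as [Hlt|Hge].
  - assert (Hs : F (A + C) - F A < F (m + C) - F m).
    { apply (strict_inc (fun x => F (x + C) - F x) (fun a => g (a + C) - g a) A m Hlt).
      - intros x Hx. apply psi_deriv; unfold m in *; lra.
      - intros x Hx. apply psi_cont; unfold m in *; lra.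
      - intros x Hx. pose proof (gdiff_pos x C HCp ltac:(lra) ltac:(unfold m in *; lra)). lra. }
    split; [lra|intros; lra].
  - destruct (Rle_lt_or_eq_dec m A Hge) as [Hgt|Heq].
    + assert (Hs : F (A + C) - F A < F (m + C) - F m).
      { apply (strict_dec (fun x => F (x + C) - F x) (fun a => g (a + C) - g a) m A Hgt).
        - intros x Hx. apply psi_deriv; unfold m in *; lra.
        - intros x Hx. apply psi_cont; unfold m in *; lra.
        - intros x Hx. pose proof (gdiff_neg x C HCp ltac:(unfold m in *; lra) ltac:(unfold m in *; lra) ltac:(lra)). lra. }
      split; [lra|intros; lra].
    + rewrite Heq. split; [lra|intros; right; reflexivity].
Qed.

Lemma H_deriv (C : R) : 0 < C < PI ->
  is_derive (fun x => -4 * F ((PI - x) / 2) - F x) C (2 * g ((PI - C) / 2) - g C).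
Proof.
  intros HC.
  apply (is_derive_ext (fun x => minus (-4 * F (-/2 * x + PI / 2)) (F (1 * x + 0)))).
  { intros t. change R in t. replace (-/2 * t + PI / 2) with ((PI - t) / 2) by field. replace (1 * t + 0) with t by ring. reflexivity. }
  replace (2 * g ((PI - C) / 2) - g C) with (minus (-4 * (-/2 * g (-/2 * C + PI / 2))) (1 * g (1 * C + 0))).
  2:{ replace (-/2 * C + PI / 2) with ((PI - C) / 2) by field. replace (1 * C + 0) with C by ring.
      unfold minus, plus, opp; simpl. field. }
  apply (is_derive_minus (fun x => -4 * F (-/2 * x + PI / 2)) (fun x => F (1 * x + 0))).
  - apply (is_derive_scal (fun x => F (-/2 * x + PI / 2))). apply Flin_deriv. lra.
  - apply Flin_deriv. lra.
Qed.

Lemma H_cont (C : R) : 0 <= C <= PI -> continuity_pt (fun x => -4 * F ((PI - x) / 2) - F x) C.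
Proof.
  intros HC. apply continuity_pt_minus; [|apply F_cont; lra].
  apply continuity_pt_mult; [apply continuity_pt_const; intros ? ?; reflexivity|].
  apply (cont_ext_loc _ (fun x => F (-/2 * x + PI / 2)) C 1); [lra| intros; f_equal; field|].
  apply Flin_cont. lra.
Qed.

Lemma Hd_sign (C : R) : 0 < C < PI ->
  (C < PI / 2 -> 0 < 2 * g ((PI - C) / 2) - g C) /\ (PI / 2 < C -> 2 * g ((PI - C) / 2) - g C < 0).
Proof.
  intros HC. pose proof PI_RGT_0.
  set (s := sin (C / 2)). set (c := cos (C / 2)).
  assert (Hs : 0 < s) by (apply sin_gt_0; lra).
  assert (Hc : 0 < c) by (apply cos_gt_0; lra).
  assert (E1 : g ((PI - C) / 2) = ln (2 * c)).
  { unfold g, c. replace ((PI - C) / 2) with (PI / 2 - C / 2) by field. now rewrite sin_shift. }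
  assert (E2 : g C = ln ((2 * s) * (2 * c))).
  { unfold g, s, c. replace C with (2 * (C / 2)) at 1 by field. rewrite sin_2a. f_equal. ring. }
  assert (E3 : 2 * g ((PI - C) / 2) = ln ((2 * c) * (2 * c))) by (rewrite E1, (ln_mult (2 * c) (2 * c)); lra).
  assert (Hcs : c = sin (PI / 2 - C / 2)) by (unfold c; now rewrite sin_shift).
  split; intros Hlt.
  - assert (s < c).
    { rewrite Hcs. unfold s. apply sin_increasing_1; lra. }
    rewrite E3, E2. assert (ln (2 * s * (2 * c)) < ln (2 * c * (2 * c))); [|lra].
    apply ln_increasing; nra.
  - assert (c < s).
    { rewrite Hcs. unfold s. apply sin_increasing_1; lra. }
    rewrite E3, E2. assert (ln (2 * c * (2 * c)) < ln (2 * s * (2 * c))); [|lra].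
    apply ln_increasing; nra.
Qed.

Lemma h_bound (C : R) : 0 <= C <= PI ->
  -4 * F ((PI - C) / 2) - F C <= -4 * F (PI / 4) - F (PI / 2) /\
  (-4 * F ((PI - C) / 2) - F C = -4 * F (PI / 4) - F (PI / 2) -> C = PI / 2).
Proof.
  intros HC. pose proof PI_RGT_0.
  set (Hf := fun x => -4 * F ((PI - x) / 2) - F x).
  assert (Hp : Hf (PI / 2) = -4 * F (PI / 4) - F (PI / 2)).
  { unfold Hf. f_equal. f_equal. f_equal. field. }
  change (-4 * F ((PI - C) / 2) - F C) with (Hf C). rewrite <- Hp.
  destruct (Rlt_or_le C (PI / 2)) as [Hlt|Hge].
  - assert (Hf C < Hf (PI / 2)); [|split; lra].
    apply (strict_inc Hf (fun x => 2 * g ((PI - x) / 2) - g x) C (PI / 2) Hlt).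
    + intros x Hx. apply H_deriv. lra.
    + intros x Hx. apply H_cont. lra.
    + intros x Hx. apply (Hd_sign x ltac:(lra)). lra.
  - destruct (Rle_lt_or_eq_dec (PI / 2) C Hge) as [Hgt|Heq].
    + assert (Hf C < Hf (PI / 2)); [|split; lra].
      apply (strict_dec Hf (fun x => 2 * g ((PI - x) / 2) - g x) (PI / 2) C Hgt).
      * intros x Hx. apply H_deriv. lra.
      * intros x Hx. apply H_cont. lra.
      * intros x Hx. apply (Hd_sign x ltac:(lra)). lra.
    + rewrite <- Heq. split; [lra|intros; reflexivity].
Qed.

Definition Gfun (A B C : R) : R := (F (A + C) - F A) + (F (B + C) - F B) - (F C - F 0).
Definition T0 : R := 4 * (F 0 - F (PI / 4)).

Lemma W_eq (C : R) : 0 <= C <= PI -> F ((PI + C) / 2) - F ((PI - C) / 2) = 2 * F 0 - 2 * F ((PI - C) / 2).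
Proof.
  intros HC. pose proof (F_sym ((PI - C) / 2) ltac:(lra)) as H.
  replace (PI - (PI - C) / 2) with ((PI + C) / 2) in H by field. lra.
Qed.

Lemma Gfun_bound (A B C : R) : 0 <= A -> 0 <= B -> 0 <= C -> A + B + C <= PI ->
  Gfun A B C <= T0 /\ (Gfun A B C = T0 -> A = PI / 4 /\ B = PI / 4 /\ C = PI / 2).
Proof.
  intros HA HB HC HS. pose proof PI_RGT_0.
  destruct (window A C HC HA ltac:(lra)) as [WA WAe].
  destruct (window B C HC HB ltac:(lra)) as [WB WBe].
  destruct (h_bound C ltac:(lra)) as [Hh Hhe].
  rewrite W_eq in WA, WAe, WB, WBe by lra.
  pose proof F_half.
  unfold Gfun, T0. split; [lra|].
  intros Heq.
  assert (HC2 : C = PI / 2) by (apply Hhe; lra).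
  destruct (WAe ltac:(lra)) as [|HA2]; [lra|].
  destruct (WBe ltac:(lra)) as [|HB2]; [lra|].
  rewrite HC2 in HA2, HB2. split; [rewrite HA2; field|split; [rewrite HB2; field|exact HC2]].
Qed.

Lemma Gfun_opt : Gfun (PI / 4) (PI / 4) (PI / 2) = T0.
Proof.
  pose proof PI_RGT_0. unfold Gfun, T0.
  pose proof (F_sym (PI / 4) ltac:(lra)) as H1.
  replace (PI - PI / 4) with (PI / 4 + PI / 2) in H1 by field.
  pose proof F_half. lra.
Qed.
Lemma lim_lin3 (u v : nat -> nat) (a b c : R) :
  is_lim_seq (fun N => INR (u N) / (INR N + / 2)) a ->
  is_lim_seq (fun N => INR (v N) / (INR N + / 2)) b ->
  is_lim_seq (fun N => INR (u N) / (INR N + / 2) - INR (v N) / (INR N + / 2) - c * hN N) (a - b).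
Proof.
  intros Ha Hb.
  replace (a - b) with (a - b - c * 0) by ring.
  apply is_lim_seq_minus'; [apply is_lim_seq_minus'; assumption|].
  apply is_lim_seq_mult'; [apply is_lim_seq_const|apply hN_lim].
Qed.

Lemma lim_nonneg (u : nat -> nat) (a : R) :
  is_lim_seq (fun N => INR (u N) / (INR N + / 2)) a -> 0 <= a.
Proof.
  intros Ha.
  assert (H0 := is_lim_seq_le_loc (fun _ => 0) (fun N => INR (u N) / (INR N + / 2)) 0 a).
  simpl in H0. apply H0; [|apply is_lim_seq_const|exact Ha].
  exists 0%nat. intros N _. unfold Rdiv. apply Rmult_le_pos; [apply pos_INR|left; apply hN_pos].
Qed.

Theorem lemma4p1
  (M nM lM : nat -> nat) (N0 : nat) (s ns ls : R) :
  0 <= s <= 1 ->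
  (forall N, (N0 <= N)%nat ->
     (1 <= M N)%nat /\ (M N <= N)%nat /\
     (1 <= nM N)%nat /\ (nM N <= M N - 1)%nat /\
     (1 <= lM N)%nat /\ (lM N <= M N - 1 - nM N)%nat /\
     (forall n l, (1 <= n)%nat -> (n <= M N - 1)%nat ->
                  (1 <= l)%nat -> (l <= M N - 1 - n)%nat ->
                  cM (M N) n l (tN N) <= cM (M N) (nM N) (lM N) (tN N))) ->
  is_lim_seq (fun N => INR (M N) / (INR N + / 2)) s ->
  is_lim_seq (fun N => INR (nM N) / (INR N + / 2)) ns ->
  is_lim_seq (fun N => INR (lM N) / (INR N + / 2)) ls ->
  exists L : R,
    is_lim_seq (fun N => / (INR N + / 2) * ln (cM (M N) (nM N) (lM N) (tN N))) L
    /\ L <= v8 / (2 * PI)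
    /\ (L = v8 / (2 * PI) <-> (s = 1 /\ ns = 1 / 2 /\ ls = 1 / 4)).
Proof.
  intros Hs Hyp HM Hn Hl. pose proof PI_RGT_0 as HP.
  set (b1 := fun N => (M N - lM N - 1)%nat).
  set (b2 := fun N => (M N - lM N - nM N - 1)%nat).
  set (b3 := fun N => (lM N + nM N)%nat).
  assert (L1 : is_lim_seq (fun N => INR (b1 N) / (INR N + / 2)) (s - ls)).
  { apply (is_lim_seq_ext_loc (fun N => INR (M N) / (INR N + / 2) - INR (lM N) / (INR N + / 2) - 1 * hN N)).
    - exists N0. intros N HN. destruct (Hyp N HN) as (H1 & H2 & H3 & H4 & H5 & H6 & _).
      unfold b1. rewrite !minus_INR by lia. simpl INR. unfold hN, Rdiv. ring.
    - apply lim_lin3; assumption. }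
  assert (L2 : is_lim_seq (fun N => INR (b2 N) / (INR N + / 2)) (s - ls - ns)).
  { apply (is_lim_seq_ext_loc (fun N => (INR (M N) / (INR N + / 2) - INR (lM N) / (INR N + / 2) - 0 * hN N)
                                        - INR (nM N) / (INR N + / 2) - 1 * hN N)).
    - exists N0. intros N HN. destruct (Hyp N HN) as (H1 & H2 & H3 & H4 & H5 & H6 & _).
      unfold b2. rewrite !minus_INR by lia. simpl INR. unfold hN, Rdiv. ring.
    - replace (s - ls - ns) with ((s - ls - 0 * 0) - ns - 1 * 0) by ring.
      apply is_lim_seq_minus'; [apply is_lim_seq_minus'|].
      + apply is_lim_seq_minus'; [apply is_lim_seq_minus'; assumption|].
        apply is_lim_seq_mult'; [apply is_lim_seq_const|apply hN_lim].
      + assumption.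
      + apply is_lim_seq_mult'; [apply is_lim_seq_const|apply hN_lim]. }
  assert (L3 : is_lim_seq (fun N => INR (b3 N) / (INR N + / 2)) (ls + ns)).
  { apply (is_lim_seq_ext (fun N => INR (lM N) / (INR N + / 2) + INR (nM N) / (INR N + / 2))).
    - intros N. unfold b3. rewrite plus_INR. unfold Rdiv. ring.
    - apply is_lim_seq_plus'; assumption. }
  assert (R1 := RS b1 (s - ls) N0 ltac:(intros N HN; destruct (Hyp N HN) as (H1 & H2 & _); unfold b1; lia) L1).
  assert (R2 := RS b2 (s - ls - ns) N0 ltac:(intros N HN; destruct (Hyp N HN) as (H1 & H2 & _); unfold b2; lia) L2).
  assert (R3 := RS b3 (ls + ns) N0 ltac:(intros N HN; destruct (Hyp N HN) as (H1 & H2 & H3 & H4 & H5 & H6 & _); unfold b3; lia) L3).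
  assert (R4 := RS lM ls N0 ltac:(intros N HN; destruct (Hyp N HN) as (H1 & H2 & H3 & H4 & H5 & H6 & _); lia) Hl).
  assert (R5 := RS nM ns N0 ltac:(intros N HN; destruct (Hyp N HN) as (H1 & H2 & H3 & H4 & H5 & H6 & _); lia) Hn).
  set (f1 := F (PI * (s - ls)) - F 0) in *.
  set (f2 := F (PI * (s - ls - ns)) - F 0) in *.
  set (f3 := F (PI * (ls + ns)) - F 0) in *.
  set (f4 := F (PI * ls) - F 0) in *.
  set (f5 := F (PI * ns) - F 0) in *.
  exists (/ PI * (((f1 - f2) + (f3 - f4)) - f5)).
  assert (Hns : 0 <= ns) by (apply (lim_nonneg nM); exact Hn).
  assert (Hls : 0 <= ls) by (apply (lim_nonneg lM); exact Hl).
  assert (Hb2 : 0 <= s - ls - ns) by (apply (lim_nonneg b2); exact L2).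
  set (A := PI * (s - ls - ns)). set (B := PI * ls). set (C := PI * ns).
  assert (HA : 0 <= A) by (unfold A; nra). assert (HB : 0 <= B) by (unfold B; nra).
  assert (HC : 0 <= C) by (unfold C; nra).
  assert (HABC : A + B + C <= PI) by (unfold A, B, C; nra).
  assert (EG : ((f1 - f2) + (f3 - f4)) - f5 = Gfun A B C).
  { unfold Gfun, f1, f2, f3, f4, f5, A, B, C.
    replace (PI * (s - ls - ns) + PI * ns) with (PI * (s - ls)) by ring.
    replace (PI * ls + PI * ns) with (PI * (ls + ns)) by ring. ring. }
  assert (Ev8 : v8 / (2 * PI) = / PI * T0).
  { unfold v8, T0. rewrite Lob_F by lra. field. lra. }
  rewrite EG, Ev8.
  destruct (Gfun_bound A B C HA HB HC HABC) as [Gb Ge].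
  split; [|split].
  - apply (is_lim_seq_ext_loc (fun N => / PI * (((dl N * Sd (dl N) (b1 N) - dl N * Sd (dl N) (b2 N))
                                   + (dl N * Sd (dl N) (b3 N) - dl N * Sd (dl N) (lM N))) - dl N * Sd (dl N) (nM N)))).
    + exists N0. intros N HN. destruct (Hyp N HN) as (H1 & H2 & H3 & H4 & H5 & H6 & _).
      destruct (ln_cM N (M N) (nM N) (lM N) H5 ltac:(lia) H2) as [_ Hln].
      rewrite Hln. unfold b1, b2, b3. unfold dl. change (/ (INR N + / 2)) with (hN N). field. lra.
    + rewrite <- EG. apply is_lim_seq_mult'; [apply is_lim_seq_const|].
      apply is_lim_seq_minus'; [apply is_lim_seq_plus'|exact R5]; apply is_lim_seq_minus'; assumption.
  - apply Rmult_le_compat_l; [left; apply Rinv_0_lt_compat; lra|exact Gb].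
  - split.
    + intros Heq. assert (HG : Gfun A B C = T0).
      { apply (Rmult_eq_reg_l (/ PI)); [exact Heq|apply Rinv_neq_0_compat; lra]. }
      destruct (Ge HG) as (HA4 & HB4 & HC2). unfold A, B, C in *.
      assert (E1 : ns = 1 / 2) by (apply (Rmult_eq_reg_l PI); [rewrite HC2; field|lra]).
      assert (E2 : ls = 1 / 4) by (apply (Rmult_eq_reg_l PI); [rewrite HB4; field|lra]).
      assert (E3 : s - ls - ns = 1 / 4) by (apply (Rmult_eq_reg_l PI); [rewrite HA4; field|lra]).
      split; [lra|split; assumption].
    + intros (E1 & E2 & E3). f_equal.
      assert (A = PI / 4) by (unfold A; rewrite E1, E2, E3; field).
      assert (B = PI / 4) by (unfold B; rewrite E3; field).
      assert (C = PI / 2) by (unfold C; rewrite E2; field).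
      rewrite H, H0, H1. apply Gfun_opt.
Qed.
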